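(* The matrix $Z=(\alpha(i,j))_{i,j\in\mathbf N}$ has the following properties: (a) $\alpha(i,j)=\delta_{i,j}$ if $i$ is odd. (b) If $i=d2^k$ with $d$ odd and $k\ge1$, then $\alpha(i,j)=\alpha_k(j/d)$ if $d\mid j$, and $\alpha(i,j)=0$ otherwise. (c) $\alpha(im,jm)=\alpha(i,j)$ whenever $m$ is odd. (d) $Z$ is upper unitriangular. (e) $ZDZ^{-1}=J$. (f) $Z\in\mathcal{DR}_0$. Moreover, $Z$ is the unique matrix (indexed by $\mathbf N\times\mathbf N$) satisfying (a) and (e).
   Context: $\mathbf N=\{1,2,\dots\}$. For $k,m\in\mathbf N$, $\alpha_k(m)$ is the number of $k$-tuples of integers $\ge2$ with product $m$. The divisor matrix $D=(d_{i,j})$ has $d_{i,j}=1$ if $i\mid j$ and $0$ otherwise. $J=(J_{i,j})$ has $J_{i,j}=1$ if $j\in\{i,2i\}$ and $0$ otherwise. $Z$ is defined as follows: its odd-indexed rows have a single nonzero entry, equal to $1$, on the diagonal; for $i=2^kd$ with $d$ odd and $k\ge1$, the $i$-th row of $Z$ equals the $d$-th row of $(D-I)^k$. $\mathcal{DR}_0$ is the set of $\mathbf N\times\mathbf N$ complex matrices $A=(a_{i,j})$ with finitely many nonzero entries in each column for which there exist positive constants $C,c$ with $a_{i,j}=0$ whenever $i>Cj^c$ and $|a_{i,j}|\le Cj^c$ for all $i,j$. *)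

(* Defs.v *)
From mathcomp Require Import all_boot all_order all_algebra.
From mathcomp Require Import reals exp.
From mathcomp Require Import complex.
Set Implicit Arguments. Unset Strict Implicit. Unset Printing Implicit Defensive.
Import Order.TTheory GRing.Theory Num.Theory.
Local Open Scope ring_scope.

(* An N x N matrix (N = {1,2,...}) with complex entries.  Only entries with
   both indices >= 1 are meaningful; index 0 is junk and ignored everywhere. *)
Definition mx (R : realType) := nat -> nat -> R[i].

Definition mxeq (R : realType) (A B : mx R) : Prop :=
  forall i j, (0 < i)%N -> (0 < j)%N -> A i j = B i j.

Definition colfinite (R : realType) (A : mx R) : Prop :=
  forall j, (0 < j)%N -> exists N, forall i, (N <= i)%N -> A i j = 0.

Definition is_mxprod (R : realType) (A B P : mx R) : Prop :=
  forall i j, (0 < i)%N -> (0 < j)%N ->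
    exists N, (forall l, (N <= l)%N -> B l j = 0) /\
              P i j = \sum_(1 <= l < N) A i l * B l j.

Definition idmx (R : realType) : mx R := fun i j => (i == j)%:R.

Definition Dmx (R : realType) : mx R := fun i j => (dvdn i j)%:R.

Definition Jmx (R : realType) : mx R := fun i j => ((j == i) || (j == 2 * i)%N)%:R.

(* product of A with an upper triangular B (B_{lj} = 0 for l > j): the sum
   over l runs over 1 <= l <= j, which is the full matrix product. *)
Definition mulU (R : realType) (A B : mx R) : mx R :=
  fun i j => \sum_(1 <= l < j.+1) A i l * B l j.

(* D - I is upper triangular, so its powers are computed by mulU *)
Definition DmIpow (R : realType) (k : nat) : mx R :=
  iter k (fun P => mulU P (fun i j => Dmx R i j - idmx R i j)) (idmx R).

(* The matrix Z: odd rows are rows of the identity; for i = 2^k d, d odd,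
   k >= 1, row i of Z is row d of (D - I)^k.  Here k = logn 2 i is the
   2-adic valuation of i and d = i %/ 2^k. *)
Definition Zmx (R : realType) : mx R := fun i j =>
  if odd i then (i == j)%:R
  else DmIpow R (logn 2 i) (i %/ 2 ^ logn 2 i)%N j.

(* alpha_k(m): number of k-tuples of integers >= 2 whose product is m.
   (For m >= 1 every such factor is <= m, so tuples over 'I_m.+1 suffice.) *)
Definition alpha (k m : nat) : nat :=
  #|[set t : k.-tuple 'I_m.+1 |
      all (fun x : 'I_m.+1 => (2 <= x)%N) t && (\prod_(x <- t) (x : nat) == m)%N]|.

(* "X D X^{-1} = J", X^{-1} a two-sided inverse in the ring of
   column-finite matrices *)
Definition conj_D_J (R : realType) (X : mx R) : Prop :=
  exists Xi XD : mx R,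
    [/\ colfinite Xi, is_mxprod X Xi (idmx R), is_mxprod Xi X (idmx R),
        is_mxprod X (Dmx R) XD & is_mxprod XD Xi (Jmx R)].

Definition odd_rows_unit (R : realType) (X : mx R) : Prop :=
  forall i j, (0 < i)%N -> (0 < j)%N -> odd i -> X i j = (i == j)%:R.

Definition DR0 (R : realType) (A : mx R) : Prop :=
  colfinite A /\
  exists C c : R, [/\ 0 < C, 0 < c &
    forall i j, (0 < i)%N -> (0 < j)%N ->
      (C * powR (j%:R) c < i%:R -> A i j = 0) /\
      `|A i j| <= real_complex R (C * powR (j%:R) c)].

(* Main.v *)
Require Import Defs.
From mathcomp Require Import all_boot all_order all_algebra.
From mathcomp Require Import reals exp.
From mathcomp Require Import complex.
From mathcomp Require Import zify ring lra.
Import Order.TTheory GRing.Theory Num.Theory.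

Module Part1.
Local Open Scope ring_scope.

Fixpoint chn (k d j : nat) : nat :=
  match k with
  | 0 => (d == j)
  | k'.+1 => \sum_(1 <= l < j.+1) chn k' d l * ((l %| j) && (l != j))
  end%N.

Lemma DmIpow_chn (R : realType) k d j : DmIpow R k d j = (chn k d j)%:R.
Proof.
elim: k d j => [|k IH] d j; first by [].
rewrite /DmIpow iterS -/(DmIpow R k) /mulU /= natr_sum; apply: eq_bigr => l _.
rewrite IH natrM /Dmx /idmx; congr (_ * _).
by case: (boolP (l %| j)%N); case: eqP => [->|]; rewrite ?dvdnn ?subrr ?subr0 //= => _ ->.
Qed.

Lemma Zmx_chn (R : realType) i j :
  Zmx R i j = (chn (logn 2 i) (i %/ 2 ^ logn 2 i) j)%:R.
Proof.
rewrite /Zmx; case: ifP => oi; last by rewrite DmIpow_chn.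
by rewrite logn_coprime ?coprime2n // expn0 divn1 /=.
Qed.

Lemma decomp i : (0 < i)%N ->
  [/\ i = (i %/ 2 ^ logn 2 i) * 2 ^ logn 2 i, odd (i %/ 2 ^ logn 2 i)
    & (0 < i %/ 2 ^ logn 2 i)]%N.
Proof.
move=> i0; have [m cm im] := pfactor_coprime (isT : prime 2) i0.
have e : (i %/ 2 ^ logn 2 i = m)%N by rewrite {1}im mulnK ?expn_gt0.
rewrite e; split => //; first by rewrite -coprime2n.
by move: i0; rewrite im; case: m {cm im e}.
Qed.

Lemma logn_odd d k : odd d -> logn 2 (d * 2 ^ k) = k.
Proof.
move=> od; rewrite logn_Gauss ?coprime2n // pfactorK //.
Qed.

Lemma div_odd d k : (d * 2 ^ k %/ 2 ^ k = d)%N.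
Proof. by rewrite mulnK ?expn_gt0. Qed.

End Part1.
Import Part1.

Module Part2.

Lemma sum_single (F : nat -> nat) a b L : a <= L < b ->
  (forall l, a <= l < b -> l != L -> F l = 0) -> \sum_(a <= l < b) F l = F L.
Proof.
move=> /andP[aL Lb] H.
rewrite (@big_cat_nat _ _ _ L) ?(ltnW Lb) //= (@big_ltn _ _ _ L b) // !big1_seq ?add0n ?addn0 // => l;
  rewrite mem_index_iota => /andP[h1 h2]; apply: H; lia.
Qed.

Lemma dvd2 l j : 0 < j -> l %| j -> l != j -> 2 * l <= j.
Proof.
move=> j0 /dvdnP[q eq] ne; subst j; case: q j0 ne => [|[|q]] j0 ne.
- by rewrite mul0n in j0.
- by rewrite mul1n eqxx in ne.
- nia.
Qed.
Arguments dvd2 {l j}.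

Lemma chn_zero k d j : j < d * 2 ^ k -> chn k d j = 0.
Proof.
elim: k j => [|k IH] j /=.
  by rewrite expn0 muln1 => h; apply/eqP; rewrite eqb0; apply/eqP; lia.
move=> h; rewrite big1_seq // => l; rewrite mem_index_iota => /andP[_ lj].
case: (ltnP l (d * 2 ^ k)) => hl; first by rewrite IH.
case: (boolP ((l %| j) && (l != j))) => [/andP[a b]|]; last by rewrite muln0.
have j0 : 0 < j by lia.
have := dvd2 j0 a b; rewrite expnS in h; lia.
Qed.

Lemma chn_diag k d : 0 < d -> chn k d (d * 2 ^ k) = 1.
Proof.
move=> d0; elim: k => [|k IH] /=; first by rewrite expn0 muln1 eqxx.
rewrite (@sum_single _ _ _ (d * 2 ^ k)).
  have p0 : 0 < d * 2 ^ k by rewrite muln_gt0 d0 expn_gt0.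
  have -> : d * 2 ^ k %| d * 2 ^ k.+1 by rewrite expnS mulnCA dvdn_mull.
  have -> : d * 2 ^ k != d * 2 ^ k.+1 by apply/eqP; rewrite expnS; lia.
  by rewrite IH.
  by rewrite muln_gt0 d0 expn_gt0 /= expnS; lia.
move=> l /andP[l1 lj] ne.
case: (ltnP l (d * 2 ^ k)) => hl; first by rewrite chn_zero.
case: (boolP ((l %| _) && (l != _))) => [/andP[a b]|]; last by rewrite muln0.
have j0: 0 < d * 2 ^ k.+1 by rewrite muln_gt0 d0 expn_gt0.
have := dvd2 j0 a b.
rewrite expnS; lia.
Qed.

Lemma chn_rec k d j : 0 < j ->
  \sum_(1 <= l < j.+1) chn k d l * (l %| j) = chn k.+1 d j + chn k d j.
Proof.
move=> j0 /=.
have -> : chn k d j = \sum_(1 <= l < j.+1) chn k d l * (l == j).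
  rewrite (@sum_single _ 1 j.+1 j) ?eqxx ?muln1 //; first lia.
  by move=> l _ /negbTE ->; rewrite muln0.
rewrite -big_split /=; apply: eq_bigr => l _; case: eqP => [->|]; rewrite ?dvdnn //=.
  by rewrite muln0 add0n.
by move=> _; rewrite andbT muln0 addn0.
Qed.

End Part2.
Import Part2.

Module Part3.

Lemma divsum_reindex (G : nat -> nat) j : 0 < j ->
  \sum_(1 <= l < j.+1) G l * ((l %| j) && (l != j)) =
  \sum_(2 <= e < j.+1) G (j %/ e) * (e %| j).
Proof.
move=> j0.
transitivity (\sum_(1 <= l < j.+1) \sum_(2 <= e < j.+1) (l * e == j) * G l).
  apply: eq_big_nat => l /andP[l1 lj].
  case: (boolP ((l %| j) && (l != j))) => [/andP[a b]|c].
    rewrite muln1 (@sum_single _ _ _ (j %/ l)).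
    - by rewrite [l * _]mulnC divnK // eqxx mul1n.
    - have h2 := dvd2 j0 a b; have e := divnK a; have := leq_div j l; nia.
    move=> e _ ne; case: (l * e =P j) => // le; move: ne; rewrite -le mulKn ?eqxx //.
  rewrite muln0 big1_seq // => e; rewrite mem_index_iota => /andP[_ /andP[e2 _]].
  case: eqP => // le; move: c; rewrite -le dvdn_mulr //= negbK => /eqP; nia.
rewrite (@exchange_big_nat _ _ _ 1 j.+1 2 j.+1) /=; apply: eq_big_nat => e /andP[e2 ej].
case: (boolP (e %| j)) => ed.
  rewrite muln1 (@sum_single _ _ _ (j %/ e)).
  - by rewrite divnK // eqxx mul1n.
  - have ee := divnK ed; have := leq_div j e; nia.
  - move=> l _ ne; case: (l * e =P j) => // le; move: ne; rewrite -le mulnK ?eqxx //; lia.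
rewrite muln0 big1_seq // => l _; case: eqP => // le; move: ed; rewrite -le dvdn_mull //.
Qed.

Local Open Scope ring_scope.
Lemma invsq_sum n : (0 < n)%N ->
  \sum_(2 <= e < n.+1) ((e%:R : rat) ^+ 2)^-1 <= 1 - n%:R^-1.
Proof.
elim: n => [//|n IH] _.
case: n IH => [|n IH]; first by rewrite big_geq // divr1 subrr.
rewrite big_nat_recr //= -/(n.+1) ; have := IH isT; set S := \sum_(_ <= _ < _) _ => h.
have h2 : ((n.+2%:R : rat) ^+ 2)^-1 <= n.+1%:R^-1 - n.+2%:R^-1.
  have -> : (n.+1%:R^-1 - n.+2%:R^-1 : rat) = (n.+1%:R * n.+2%:R)^-1.
    field; have h0 := ler0n rat n.
    by apply/andP; split; apply/negP => /eqP; lra.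
  rewrite lef_pV2 ?posrE ?exprn_gt0 ?mulr_gt0 ?ltr0n //.
  by rewrite expr2 ler_pM2r ?ltr0n // ler_nat.
by apply: le_trans (lerD h h2) _; rewrite addrA subrK.
Qed.

Lemma divsq_bound j : (\sum_(2 <= e < j.+1) (j %/ e) ^ 2 <= j ^ 2)%N.
Proof.
case: j => [|j]; first by rewrite big_geq.
rewrite -(ler_nat rat) natr_sum.
apply: (le_trans (y := \sum_(2 <= e < j.+2) (j.+1%:R ^+ 2) * ((e%:R : rat) ^+ 2)^-1)).
  apply: ler_sum_nat => e /andP[e2 _].
  rewrite natrX ler_pdivlMr ?exprn_gt0 ?ltr0n; last lia.
  by rewrite -exprMn -natrM ler_pXn2r ?nnegrE ?ler0n ?ler_nat // leq_divM.
  by [].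
rewrite -mulr_sumr natrX.
have h0 : 0 <= (j.+1%:R : rat) ^+ 2 by rewrite exprn_ge0 ?ler0n.
apply: (@le_trans _ _ (j.+1%:R ^+ 2 * (1 - j.+1%:R^-1))).
  apply: ler_wpM2l => //. exact: invsq_sum.
rewrite mulrBr mulr1 lerBlDr lerDl.
by rewrite mulr_ge0 ?invr_ge0 ?ler0n.
Qed.
Local Close Scope ring_scope.

Lemma chn_bound k d j : 0 < d -> chn k d j <= j ^ 2.
Proof.
move=> d0; elim: k j => [|k IH] j /=.
  by case: eqP => // <-; rewrite expn_gt0 d0.
case: j => [|j]; first by rewrite big_geq.
apply: (leq_trans (n := \sum_(1 <= l < j.+2) l ^ 2 * ((l %| j.+1) && (l != j.+1)))).
  by apply: leq_sum => l _; rewrite leq_mul2r IH orbT.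
rewrite divsum_reindex //; apply: leq_trans (divsq_bound _).
by apply: leq_sum => e _; case: (e %| _); rewrite ?muln1 ?muln0.
Qed.

End Part3.
Import Part3.

Module Part4.

Definition tc (N k d j : nat) : nat :=
  \sum_(t : k.-tuple 'I_N.+1)
     (all (fun x : 'I_N.+1 => 2 <= x) t && (d * \prod_(x <- t) (x : nat) == j)).

Lemma sum_tupleS (T : finType) k (F : k.+1.-tuple T -> nat) :
  \sum_(t : k.+1.-tuple T) F t =
  \sum_(x : T) \sum_(t : k.-tuple T) F [tuple of x :: t].
Proof.
rewrite pair_big /=.
rewrite (reindex (fun p : T * k.-tuple T => [tuple of p.1 :: p.2])) //=.
exists (fun u : k.+1.-tuple T => (thead u, [tuple of behead u])).
  by move=> [x t] _ /=; congr pair; apply: val_inj.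
by move=> u _; rewrite [RHS]tuple_eta.
Qed.

Lemma sum_tuple0 (T : finType) (F : 0.-tuple T -> nat) :
  \sum_(t : 0.-tuple T) F t = F [tuple].
Proof. by rewrite (big_pred1 [tuple]) // => t; rewrite /= (tuple0 t); apply/esym/eqP. Qed.

Lemma L1 q j : 0 < q -> 0 < j ->
  \sum_(1 <= l < j.+1) (q == l) * ((l %| j) && (l != j)) = (q %| j) && (q != j).
Proof.
move=> q0 j0; case: (leqP q j) => qj.
  rewrite (@sum_single _ _ _ q) ?eqxx ?mul1n //; first lia.
  by move=> l _ /negbTE; rewrite eq_sym => ->.
rewrite big1_seq; last by move=> l /andP[_]; rewrite mem_index_iota => h; case: eqP => // e; lia.
by case: (boolP (q %| j)) => // /(dvdn_leq j0); lia.
Qed.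

Lemma L2 N q j : 0 < q -> 0 < j -> j <= N ->
  \sum_(x : 'I_N.+1) ((2 <= x) && (q * x == j)) = (q %| j) && (q != j).
Proof.
move=> q0 j0 jN.
rewrite -(big_mkord xpredT (fun x => ((2 <= x) && (q * x == j)) : nat)).
case: (boolP ((q %| j) && (q != j))) => [/andP[a b]|c].
  rewrite (@sum_single _ _ _ (j %/ q)).
  - by rewrite muln_divA // mulKn // eqxx andbT /=; have := dvd2 j0 a b; have := divnK a; nia.
  - have := dvd2 j0 a b; have := divnK a; have := leq_div j q; nia.
  - move=> x _ ne; case: (q * x =P j) => [e|]; last by rewrite andbF.
    by move: ne; rewrite -e mulKn // eqxx.
rewrite big1_seq // => x /andP[_]; rewrite mem_index_iota => hx.
case: (q * x =P j) => [e|]; last by rewrite andbF.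
move: c; rewrite -e dvdn_mulr //= negbK => /eqP h.
have : x = 1 by nia.
by move=> ->.
Qed.

Lemma prod_pos N (t : seq 'I_N.+1) :
  all (fun x : 'I_N.+1 => 2 <= x) t -> 0 < \prod_(x <- t) (x : nat).
Proof.
elim: t => [|x t IH] /=; first by rewrite big_nil.
by case/andP=> h1 h2; rewrite big_cons muln_gt0 IH // andbT; lia.
Qed.

Lemma chn_tc N k d : 0 < d -> forall j, 0 < j -> j <= N -> chn k d j = tc N k d j.
Proof.
move=> d0; elim: k => [|k IH] j j0 jN.
  by rewrite /tc sum_tuple0 /= big_nil muln1.
rewrite /= (eq_big_nat _ _ (F2 := fun l => tc N k d l * ((l %| j) && (l != j)))); last first.
  by move=> l hl; rewrite IH //; lia.
rewrite /tc sum_tupleS.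
under eq_bigr do rewrite big_distrl /=.
rewrite exchange_big /= [RHS]exchange_big /=.
apply: eq_bigr => t _.
set P := \prod_(y <- t) (y : nat).
have E : forall x : 'I_N.+1, (((2 <= x) && all (fun x : 'I_N.+1 => 2 <= x) t &&
   (d * \prod_(y <- x :: t) (y : nat) == j)) : nat) =
   all (fun x : 'I_N.+1 => 2 <= x) t * ((2 <= x) && (d * P * x == j)).
  move=> x; rewrite big_cons -/P [x * _]mulnC mulnA.
  by case: (all _ t); case: (d * P * x == j); case: (1 < x).
rewrite [RHS](eq_bigr _ (fun x _ => E x)).
rewrite -big_distrr /=.
case: (boolP (all _ t)) => ht; last first.
  by rewrite mul0n big1 // => l _; rewrite (negbTE ht).
rewrite mul1n L2 ?muln_gt0 ?d0 ?prod_pos //.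
rewrite -L1 ?muln_gt0 ?d0 ?prod_pos //.
Qed.

Lemma alpha_tc k m : alpha k m = tc m k 1 m.
Proof.
rewrite /alpha /tc -sum1_card big_mkcond /=; apply: eq_bigr => t _.
by rewrite inE mul1n; case: (_ && _).
Qed.

Lemma chn_alpha k d j : 0 < d -> 0 < j ->
  chn k d j = if d %| j then alpha k (j %/ d) else 0.
Proof.
move=> d0 j0; rewrite (@chn_tc j) //; case: ifP => dj; last first.
  rewrite /tc big1 // => t _; case: eqP; rewrite ?andbF // => e.
  have : d %| j by rewrite -e dvdn_mulr.
  by rewrite dj.
have q0 : 0 < j %/ d by rewrite divn_gt0 // dvdn_leq.
rewrite alpha_tc -(@chn_tc (j %/ d)) // (@chn_tc j) //; last by rewrite leq_div.
apply: eq_bigr => t _; congr (_ && _).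
rewrite mul1n; move: (\prod_(x <- t) (x : nat)) => p.
by rewrite -{1}(divnK dj) [d * p]mulnC eqn_mul2r (negbTE (lt0n_neq0 d0)).
Qed.

End Part4.
Import Part4.

Module Part5.
Local Open Scope ring_scope.

Section Mat.
Variable R : realType.
Implicit Types A B C : mx R.

Definition upper A := forall m l, (0 < l)%N -> (l < m)%N -> A m l = 0.

Lemma sum_split_at (F : nat -> R[i]) i j : (1 <= i <= j)%N ->
  \sum_(1 <= l < j.+1) F l =
  \sum_(1 <= l < i) F l + F i + \sum_(i.+1 <= l < j.+1) F l.
Proof.
move=> /andP[h1 h2].
by rewrite (@big_cat_nat _ _ _ i) //= ?(@big_ltn _ _ _ i j.+1) ?addrA //; lia.
Qed.

Lemma sum_zero (F : nat -> R[i]) a b :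
  (forall l, (a <= l < b)%N -> F l = 0) -> \sum_(a <= l < b) F l = 0.
Proof. by move=> H; rewrite big_nat big1 // => l /H. Qed.

Lemma trunc2 (F : nat -> R[i]) N M : (N <= M)%N ->
  (forall l, (N <= l)%N -> F l = 0) ->
  \sum_(1 <= l < M) F l = \sum_(1 <= l < N) F l.
Proof.
move=> NM H; case: N NM H => [|N] NM H.
  by rewrite [RHS]big_geq // sum_zero // => l /andP[] *; apply: H.
rewrite (@big_cat_nat _ _ _ N.+1) //= (@sum_zero _ N.+1) ?addr0 //.
by move=> l /andP[] *; apply: H.
Qed.

Lemma sum_pt_in (F : nat -> R[i]) L K : (0 < L < K)%N ->
  \sum_(1 <= l < K) (l == L)%:R * F l = F L.
Proof.
move=> /andP[L0 LK]; case: K LK => [|K] LK; first lia.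
rewrite (@sum_split_at _ L K); last lia.
rewrite !sum_zero ?add0r ?addr0 ?eqxx ?mul1r // => l hl; case: eqP => [e|];
  rewrite ?mul0r //; lia.
Qed.

Lemma sum_pt (F : nat -> R[i]) L K : (0 < L)%N ->
  (forall l, (K <= l)%N -> F l = 0) ->
  \sum_(1 <= l < K) (l == L)%:R * F l = F L.
Proof.
move=> L0 H; case: (ltnP L K) => LK; first by rewrite sum_pt_in ?L0.
rewrite H // sum_zero // => l hl; case: eqP => [e|]; rewrite ?mul0r //; lia.
Qed.

Lemma mulU_assoc A B C : upper B ->
  forall i j, mulU (mulU A B) C i j = mulU A (mulU B C) i j.
Proof.
move=> uB i j; rewrite /mulU.
have E : forall l, (1 <= l < j.+1)%N ->
    (\sum_(1 <= m < l.+1) A i m * B m l) * C l j =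
    \sum_(1 <= m < j.+1) A i m * B m l * C l j.
  move=> l /andP[l1 lj]; rewrite mulr_suml [RHS](@trunc2 _ l.+1) //.
  by move=> m hm; rewrite uB ?mulr0 ?mul0r //; lia.
rewrite (eq_big_nat _ _ E) (@exchange_big_nat _ _ _ 1 j.+1 1 j.+1) /=.
by apply: eq_bigr => m _; rewrite mulr_sumr; apply: eq_bigr => l _; rewrite mulrA.
Qed.

Lemma mulU_congr_r A B B' i j : (forall l, (0 < l)%N -> B l j = B' l j) ->
  mulU A B i j = mulU A B' i j.
Proof. by move=> H; apply: eq_big_nat => l /andP[l1 _]; rewrite H. Qed.

Lemma mulU_congr_l A A' B i j : (forall l, (0 < l)%N -> A i l = A' i l) ->
  mulU A B i j = mulU A' B i j.
Proof. by move=> H; apply: eq_big_nat => l /andP[l1 _]; rewrite H. Qed.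

Lemma mulU_id_r A i j : (0 < j)%N -> mulU A (idmx R) i j = A i j.
Proof.
move=> j0; rewrite /mulU /idmx.
under eq_bigr do rewrite mulrC.
rewrite (@sum_pt_in (fun l => A i l) j j.+1).
  by []. by rewrite j0 /=.
Qed.

Lemma is_mxprod_U A B P : upper B ->
  (forall i j, (0 < i)%N -> (0 < j)%N -> P i j = mulU A B i j) -> is_mxprod A B P.
Proof.
move=> uB HP i j i0 j0; exists j.+1; split; last by rewrite HP.
by move=> l hl; rewrite uB.
Qed.

Lemma upper_colfinite A : upper A -> colfinite A.
Proof. by move=> uA j j0; exists j.+1 => l hl; rewrite uA. Qed.

Fixpoint uaux A (n i j : nat) : R[i] :=
  match n with
  | 0 => (i == j)%:R
  | n'.+1 => if i == j then 1 else if (j < i)%N then 0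
             else - \sum_(i.+1 <= l < j.+1) A i l * uaux A n' l j
  end.

Definition uinv A : mx R := fun i j => uaux A (j - i) i j.

Lemma uaux_fuel A n m i j : (j - i <= n)%N -> (j - i <= m)%N ->
  uaux A n i j = uaux A m i j.
Proof.
elim: n m i => [|n IH] [|m] i h1 h2 //=.
- by case: eqP => // ne; rewrite ifT //; lia.
- by case: eqP => // ne; rewrite ifT //; lia.
- case: eqP => // ne; case: ifP => // ji; congr (- _); apply: eq_big_nat => l hl.
  by rewrite (IH m) //; lia.
Qed.

Lemma uinv_eq A i j : (i < j)%N ->
  uinv A i j = - \sum_(i.+1 <= l < j.+1) A i l * uinv A l j.
Proof.
move=> ij; rewrite /uinv; have -> : (j - i = (j - i).-1.+1)%N by lia.
rewrite /= ifF; last by apply/eqP; lia.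
rewrite ifF; last by apply/negbTE; rewrite -leqNgt ltnW.
congr (- _); apply: eq_big_nat => l hl; rewrite (@uaux_fuel _ _ (j - l)%N) //; lia.
Qed.

Lemma uinv_upper A : upper (uinv A).
Proof. by move=> m l _ lm; rewrite /uinv (_ : (l - m = 0)%N) /=; [case: eqP => //; lia | lia]. Qed.

Lemma uinv_diag A i : uinv A i i = 1.
Proof. by rewrite /uinv subnn /= eqxx. Qed.

Lemma uinv_right A : upper A -> (forall i, (0 < i)%N -> A i i = 1) ->
  forall i j, (0 < i)%N -> (0 < j)%N -> mulU A (uinv A) i j = idmx R i j.
Proof.
move=> uA dA i j i0 j0; rewrite /mulU /idmx.
case: (ltngtP i j) => ij.
- rewrite (@sum_split_at _ i j) ?i0 ?(ltnW ij) // sum_zero ?add0r; last first.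
    by move=> l hl; rewrite uA ?mul0r //; lia.
  by rewrite dA // mul1r (@uinv_eq A i j ij) addNr.
- rewrite sum_zero // => l hl; rewrite uA ?mul0r //; lia.
- rewrite ij (@sum_split_at _ j j) ?j0 ?leqnn // (@sum_zero _ 1 j) ?add0r; last first.
    by move=> l hl; rewrite uA ?mul0r //; lia.
  by rewrite big_geq // addr0 dA // uinv_diag mulr1.
Qed.

Lemma uinv_left A : upper A -> (forall i, (0 < i)%N -> A i i = 1) ->
  forall i j, (0 < i)%N -> (0 < j)%N -> mulU (uinv A) A i j = idmx R i j.
Proof.
move=> uA dA i j i0 j0.
set B := uinv A; set C := uinv B.
have uB : upper B := uinv_upper A.
have dB : forall i, (0 < i)%N -> B i i = 1 by move=> *; apply: uinv_diag.
have BC := @uinv_right B uB dB.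
have AB := @uinv_right A uA dA.
rewrite -(@mulU_id_r (mulU B A) i j j0).
rewrite (@mulU_congr_r (mulU B A) (idmx R) (mulU B C) i j); last first.
  by move=> l l0; rewrite BC.
rewrite -mulU_assoc //.
rewrite (@mulU_congr_l (mulU (mulU B A) B) (mulU B (mulU A B)) C i j); last first.
  by move=> l l0; rewrite mulU_assoc.
rewrite (@mulU_congr_l _ (mulU B (idmx R))); last first.
  by move=> l l0; apply: mulU_congr_r => m m0; rewrite AB.
rewrite (@mulU_congr_l _ B); last by move=> l l0; rewrite mulU_id_r.
by rewrite BC.
Qed.

End Mat.
Arguments upper {R} A.
Arguments uinv {R} A _ _.
Arguments sum_split_at {R}.
Arguments sum_zero {R}.
Arguments trunc2 {R}.
Arguments sum_pt_in {R}.
Arguments sum_pt {R}.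
Arguments mulU_assoc {R}.
Arguments mulU_congr_r {R}.
Arguments mulU_congr_l {R}.
Arguments mulU_id_r {R}.
Arguments is_mxprod_U {R}.
Arguments upper_colfinite {R}.
Arguments uinv_upper {R}.
Arguments uinv_right {R}.
Arguments uinv_left {R}.

End Part5.
Import Part5.

Module Part6.
Local Open Scope ring_scope.

Arguments decomp {i}.
Section Zsec.
Variable R : realType.

Lemma Z_upper : upper (Zmx R).
Proof.
move=> m l l0 lm; have m0 : (0 < m)%N by lia.
have [e od d0] := decomp m0.
by rewrite Zmx_chn chn_zero //; rewrite -e.
Qed.

Lemma Z_diag i : (0 < i)%N -> Zmx R i i = 1.
Proof.
move=> i0; have [e od d0] := decomp i0.
by rewrite Zmx_chn [X in chn _ _ X]e chn_diag.
Qed.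

Lemma log2S i : (0 < i)%N -> logn 2 (2 * i) = (logn 2 i).+1.
Proof. by move=> i0; rewrite lognM // logn_prime. Qed.

Lemma div2S i : (2 * i %/ 2 ^ (logn 2 i).+1 = i %/ 2 ^ logn 2 i)%N.
Proof. by rewrite expnS divnMl. Qed.

Lemma Z_rec i j : (0 < i)%N -> (0 < j)%N ->
  \sum_(1 <= l < j.+1) Zmx R i l * (l %| j)%:R = Zmx R i j + Zmx R (2 * i) j.
Proof.
move=> i0 j0; rewrite [Zmx R (2 * i) j]Zmx_chn log2S // div2S.
under eq_bigr do rewrite Zmx_chn -natrM.
by rewrite -natr_sum chn_rec // natrD addrC Zmx_chn.
Qed.

Lemma Jsplit i l : (0 < i)%N ->
  Jmx R i l = (l == i)%:R + (l == 2 * i)%N%:R.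
Proof.
move=> i0; rewrite /Jmx; have h : (i == 2 * i)%N = false by apply/eqP; lia.
case: (l =P i) => [->|_]; first by rewrite h /= addr0.
by rewrite /= add0r.
Qed.

Lemma ZDJZ i j : (0 < i)%N -> (0 < j)%N ->
  mulU (Zmx R) (Dmx R) i j = mulU (Jmx R) (Zmx R) i j.
Proof.
move=> i0 j0; rewrite /mulU Z_rec //.
under eq_bigr do rewrite Jsplit // mulrDl.
rewrite big_split /= !sum_pt //; first lia.
- by move=> l hl; rewrite Z_upper //.
- by move=> l hl; rewrite Z_upper //.
Qed.

Lemma D_upper : upper (Dmx R).
Proof. by move=> m l l0 lm; rewrite /Dmx gtnNdvd. Qed.

Lemma conj_Z : conj_D_J (Zmx R).
Proof.
have uZ := Z_upper; have dZ := Z_diag.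
exists (uinv (Zmx R)), (mulU (Zmx R) (Dmx R)); split.
- exact/upper_colfinite/uinv_upper.
- apply: is_mxprod_U; first exact: uinv_upper.
  by move=> i j i0 j0; rewrite uinv_right.
- apply: is_mxprod_U => //.
  by move=> i j i0 j0; rewrite uinv_left.
- by apply: is_mxprod_U; first exact: D_upper.
- apply: is_mxprod_U; first exact: uinv_upper.
  move=> i j i0 j0.
  rewrite (@mulU_congr_l _ _ (mulU (Jmx R) (Zmx R))); last by move=> l l0; rewrite ZDJZ.
  rewrite mulU_assoc // (@mulU_congr_r _ _ _ (idmx R)); last first.
    by move=> l l0; rewrite uinv_right.
  by rewrite mulU_id_r.
Qed.

Lemma DR0_Z : DR0 (Zmx R).
Proof.
split; first exact/upper_colfinite/Z_upper.
exists 1, 2; split => // i j i0 j0.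
rewrite mul1r powR_mulrn ?ler0n // -natrX.
split.
  rewrite ltr_nat => h; rewrite Z_upper //; nia.
have [e od d0] := decomp i0.
rewrite Zmx_chn normr_nat rmorph_nat ler_nat.
exact: chn_bound.
Qed.

End Zsec.

End Part6.
Import Part6.

Module Part7.
Local Open Scope ring_scope.
Arguments decomp {i}.

Section Z2.
Variable R : realType.

Lemma partb i j d k : (0 < i)%N -> (0 < j)%N -> odd d -> (1 <= k)%N ->
     i = (d * 2 ^ k)%N ->
     Zmx R i j = if (d %| j)%N then (alpha k (j %/ d))%:R else 0.
Proof.
move=> i0 j0 od k1 ->; rewrite Zmx_chn logn_odd // div_odd chn_alpha //; last first.
  by case: d od {i0}.
by case: ifP.
Qed.

Lemma partc i j m : (0 < i)%N -> (0 < j)%N -> odd m ->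
     Zmx R (i * m)%N (j * m)%N = Zmx R i j.
Proof.
move=> i0 j0 om; have m0 : (0 < m)%N by case: m om.
have [e od d0] := decomp i0.
rewrite !Zmx_chn lognM // (logn_coprime (m := m)) ?coprime2n // addn0.
rewrite mulnC -muln_divA ?pfactor_dvdnn // mulnC.
rewrite !chn_alpha ?muln_gt0 ?d0 ?j0 ?m0 //.
by rewrite dvdn_pmul2r // divnMr.
Qed.

Lemma uniq_part (X : mx R) : colfinite X -> odd_rows_unit X -> conj_D_J X ->
  mxeq X (Zmx R).
Proof.
move=> cX oX [Xi [XD [cXi h1 h2 h3 h4]]].
have key : forall i j, (0 < i)%N -> (0 < j)%N ->
    X (2 * i)%N j = \sum_(1 <= l < j.+1) X i l * (l %| j)%:R - X i j.
  move=> i j i0 j0.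
  have E1 : XD i j = \sum_(1 <= l < j.+1) X i l * (l %| j)%:R.
    have [N [HN ->]] := h3 i j i0 j0.
    have NJ : (j < N)%N.
      case: (ltnP j N) => // h; have := HN j h; rewrite /Dmx dvdnn => /eqP.
      by rewrite oner_eq0.
    rewrite (trunc2 _ j.+1 N) //.
    by move=> l hl; rewrite /Dmx gtnNdvd ?mulr0 //.
  have [Nx hNx] := cX j j0.
  have [M hM] : exists M, forall l, (0 < l < Nx)%N -> forall m, (M <= m)%N -> Xi m l = 0.
    elim: (Nx) => [|n [M hM]]; first by exists 0%N => l; lia.
    case: (posnP n) => [->|n0]; first by exists 0%N => l; lia.
    have [M' hM'] := cXi n n0.
    exists (maxn M M') => l hl m hm.
    case: (ltnP l n) => ln.
      by apply: hM; lia.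
    have -> : l = n by lia.
    by apply: hM'; lia.
  set K := maxn M j.+1.
  have XiX : forall m, (0 < m)%N -> (m == j)%:R = \sum_(1 <= l < Nx) Xi m l * X l j.
    move=> m m0; have [N2 [HN2 e]] := h2 m j m0 j0; rewrite /idmx in e; rewrite e.
    rewrite -(trunc2 _ N2 (maxn N2 Nx)) ?leq_maxl //; last by move=> l hl; rewrite HN2 ?mulr0.
    rewrite (trunc2 _ Nx (maxn N2 Nx)) ?leq_maxr //.
    by move=> l hl; rewrite hNx ?mulr0.
  have XDXi : forall l, (0 < l < Nx)%N ->
      Jmx R i l = \sum_(1 <= m < K) XD i m * Xi m l.
    move=> l hl; have l0 : (0 < l)%N by lia.
    have [N4 [HN4 e]] := h4 i l i0 l0.
    rewrite e.
    rewrite -(trunc2 _ N4 (maxn N4 K)) ?leq_maxl //; last by move=> m hm; rewrite HN4 ?mulr0.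
    rewrite (trunc2 _ K (maxn N4 K)) ?leq_maxr //.
    by move=> m hm; rewrite (hM l) ?mulr0 //; move: hm; rewrite /K; lia.
  have E2 : XD i j = X i j + X (2 * i)%N j.
    rewrite -(sum_pt_in (fun m => XD i m) j K); last by rewrite j0 /K; lia.
    transitivity (\sum_(1 <= m < K) XD i m * \sum_(1 <= l < Nx) Xi m l * X l j).
      by apply: eq_big_nat => m /andP[m0 _]; rewrite XiX // mulrC.
    have S1 : \sum_(1 <= l < Nx) Jmx R i l * X l j = X i j + X (2 * i)%N j.
      under eq_bigr do rewrite Jsplit // mulrDl.
      by rewrite big_split /= !sum_pt //; try lia; move=> l hl; rewrite hNx.
    rewrite -S1.
    under eq_bigr do rewrite mulr_sumr.
    rewrite (@exchange_big_nat _ _ _ 1 K 1 Nx) /=.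
    apply: eq_big_nat => l hl; rewrite XDXi // mulr_suml.
    by apply: eq_bigr => m _; rewrite mulrA.
  by rewrite -E1 E2 addrC addKr.
have ind : forall k d, odd d -> forall j, (0 < j)%N ->
    X (d * 2 ^ k)%N j = Zmx R (d * 2 ^ k)%N j.
  move=> k d od; have d0 : (0 < d)%N by case: d od.
  elim: k => [|k IH] j j0.
    by rewrite expn0 muln1 oX // /Zmx od.
  have i0 : (0 < d * 2 ^ k)%N by rewrite muln_gt0 d0 expn_gt0.
  have -> : (d * 2 ^ k.+1 = 2 * (d * 2 ^ k))%N by rewrite expnS mulnCA.
  have ZR := @Z_rec R (d * 2 ^ k) j i0 j0.
  have -> : Zmx R (2 * (d * 2 ^ k))%N j =
      \sum_(1 <= l < j.+1) Zmx R (d * 2 ^ k)%N l * (l %| j)%:R - Zmx R (d * 2 ^ k)%N j.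
    by rewrite ZR addrC addKr.
  rewrite key // IH //; congr (_ + _).
  by apply: eq_big_nat => l /andP[l0 _]; rewrite IH.
move=> i j i0 j0; have [e od d0] := decomp i0.
by rewrite e; apply: ind.
Qed.

End Z2.

End Part7.
Import Part7.

Local Open Scope ring_scope.

Theorem lemma4p4 (R : realType) :
  (* (a) *)
  odd_rows_unit (Zmx R) /\
  (* (b) *)
  (forall i j d k, (0 < i)%N -> (0 < j)%N -> odd d -> (1 <= k)%N ->
     i = (d * 2 ^ k)%N ->
     Zmx R i j = if (d %| j)%N then (alpha k (j %/ d))%:R else 0) /\
  (* (c) *)
  (forall i j m, (0 < i)%N -> (0 < j)%N -> odd m ->
     Zmx R (i * m)%N (j * m)%N = Zmx R i j) /\
  (* (d) upper unitriangular *)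
  (forall i j, (0 < i)%N -> (0 < j)%N -> (j < i)%N -> Zmx R i j = 0) /\
  (forall i, (0 < i)%N -> Zmx R i i = 1) /\
  (* (e) *)
  conj_D_J (Zmx R) /\
  (* (f) *)
  DR0 (Zmx R) /\
  (* uniqueness among column-finite matrices satisfying (a) and (e) *)
  (forall X : mx R, colfinite X -> odd_rows_unit X -> conj_D_J X ->
     mxeq X (Zmx R)).
Proof.
split; first by move=> i j i0 j0 oi; rewrite /Zmx oi.
split; first exact: partb.
split; first exact: partc.
split; first by move=> i j i0 j0 ji; apply: Z_upper.
split; first exact: Z_diag.
split; first exact: conj_Z.
split; first exact: DR0_Z.
exact: uniq_part.
Qed.
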